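(* Let $k,n,x^*$ be positive integers, $p\in(0,1)$, and let $a$ be a binary string which is a cyclic shift of $10^{a_1}10^{a_2}\cdots10^{a_k}$ with $a_1,\dots,a_k$ nonnegative integers. Put $n'=pn$ and $b_j=a_j-n(1-p)$ for $j\in[k]$. Then there is a function $\mathrm{Sym}(\cdot\,;n,p,b,x^* )$ on $\{0,1,\dots,x^*\}^k$, depending only on $n,p,b,x^*$ and invariant under permutations of its $k$ arguments, such that for every $(x_1,\dots,x_k)\in\{0,\dots,x^*\}^k$, letting $x$ denote the binary string $10^{n+x_1}10^{n+x_2}\cdots10^{n+x_k}$, $$\Pr_{\tilde{x}\sim\mathrm{Del}(x)}[\tilde{x}=a]=\mathrm{Sym}(x;n,p,b,x^* )\sum_{i=1}^{k}\prod_{j=1}^{k}\prod_{h=x_j+1}^{x^*}\left(n'-b_{j+i}+h\right),$$ where indices of $b$ are taken modulo $k$.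
   Context: $0^t$ denotes $t$ consecutive zeros. The circular deletion channel $\mathrm{Del}(x)$ with deletion probability $p$ deletes each bit of $x$ independently with probability $p$ and then returns a uniformly random cyclic shift of the resulting string. *)

(* Defs.v *)
From HB Require Import structures.
From mathcomp Require Import all_boot all_order all_algebra.
From mathcomp Require Export reals.
Set Implicit Arguments. Unset Strict Implicit. Unset Printing Implicit Defensive.
Import Order.TTheory GRing.Theory Num.Theory.
Local Open Scope ring_scope.

(* Binary strings are [bitseq]s; [true] = 1, [false] = 0. *)

(* Probability that a uniformly random cyclic shift of [s] equals [a]
   (the empty string has only the trivial shift). *)
Definition circ_shift_prob {R : realType} (s a : bitseq) : R :=
  if size s == 0%N then (s == a)%:R
  else (count (fun r => rot r s == a) (iota 0 (size s)))%:R / (size s)%:R.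

(* Pr_{x~ ~ Del(x)}[x~ = a] for the circular deletion channel with deletion
   probability p: each bit of x is kept (mask bit true) with prob. 1-p,
   deleted with prob. p, independently; then a uniform cyclic shift. *)
Definition del_prob {R : realType} (p : R) (x a : bitseq) : R :=
  \sum_(m : (size x).-tuple bool)
     (\prod_(i < size x) (if tnth m i then 1 - p else p))
     * circ_shift_prob (mask m x) a.

Definition blocks (cs : seq nat) : bitseq :=
  flatten [seq true :: nseq c false | c <- cs].

Definition xstring (n : nat) (xs : seq nat) : bitseq :=
  blocks [seq (n + v)%N | v <- xs].

(* b_{j+1} = a_{j+1} - n(1-p)  (0-indexed argument j) *)
Definition bcoef {R : realType} (n : nat) (p : R) (aseq : seq nat) (j : nat) : R :=
  (nth 0%N aseq j)%:R - n%:R * (1 - p).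

(* Main.v *)
Require Import Defs.
From HB Require Import structures.
From mathcomp Require Import all_boot all_order all_algebra.
From mathcomp Require Import reals ring lra zify.
Import Order.TTheory GRing.Theory Num.Theory.
Local Open Scope ring_scope.
Local Open Scope ring_scope.

Lemma sum_tuple_cons {R : realType} n (G : (n.+1).-tuple bool -> R) :
  \sum_(t : (n.+1).-tuple bool) G t =
  G [tuple of true :: [tuple of nseq n false]] * 0 +
  \sum_(b : bool) \sum_(t : n.-tuple bool) G [tuple of b :: t].
Abort.

Lemma sum_tuple_cons {R : realType} n (G : (n.+1).-tuple bool -> R) :
  \sum_(t : (n.+1).-tuple bool) G t =
  \sum_(b : bool) \sum_(t : n.-tuple bool) G [tuple of b :: t].
Proof.
rewrite pair_big /=.
rewrite (reindex (fun bt : bool * n.-tuple bool => [tuple of bt.1 :: bt.2])) /=.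
  by apply: eq_bigr => -[b t].
exists (fun t : (n.+1).-tuple bool => (thead t, [tuple of behead t])).
  by move=> [b t] _ /=; rewrite theadE; congr pair; apply: val_inj.
by move=> t _ /=; rewrite [RHS]tuple_eta.
Qed.

Fixpoint Erec {R : realType} (p : R) (x : bitseq) (F : bitseq -> R) : R :=
  match x with
  | [::] => F [::]
  | b :: x' => (1 - p) * Erec p x' (fun s => F (b :: s)) + p * Erec p x' F
  end.


Lemma E1 {R : realType} (p : R) (x : bitseq) (F : bitseq -> R) :
  \sum_(m : (size x).-tuple bool)
     (\prod_(i < size x) (if tnth m i then 1 - p else p)) * F (mask m x)
  = Erec p x F.
Proof.
elim: x F => [|b x IH] F /=.
  rewrite (big_pred1 [tuple]) /=; last by move=> t; rewrite [t]tuple0 /= ; apply/eqP.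
  by rewrite big_ord0 mul1r.
rewrite sum_tuple_cons big_bool /= -!IH !big_distrr /=.
congr (_ + _); apply: eq_bigr => t _; rewrite big_ord_recl /=.
all: rewrite mulrA; congr (_ * _ * _); apply: eq_bigr => i _; by rewrite !(tnth_nth false).
Qed.

Lemma Erec_ext {R : realType} (p : R) x (F G : bitseq -> R) :
  (forall s, F s = G s) -> Erec p x F = Erec p x G.
Proof.
elim: x F G => [|b x IH] F G FG /=; first exact: FG.
by rewrite (IH _ (fun s => G (b :: s))) // (IH F G).
Qed.

Lemma Erec_scale {R : realType} (p : R) x (c : R) (F : bitseq -> R) :
  Erec p x (fun s => c * F s) = c * Erec p x F.
Proof.
elim: x F => [|b x IH] F //=.
by rewrite (IH (fun s => F (b :: s))) IH; ring.
Qed.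

Lemma Erec_zero {R : realType} (p : R) x (F : bitseq -> R) :
  (forall s, subseq s x -> F s = 0) -> Erec p x F = 0.
Proof.
elim: x F => [|b x IH] F H /=; first by apply: H.
rewrite IH ?IH ?mulr0 ?addr0 // => s Hs; apply: H.
  by apply: (subseq_trans Hs); apply: subseq_cons.
by rewrite /= eqxx.
Qed.

Definition wz {R : realType} (p : R) N c : R := 'C(N, c)%:R * (1 - p) ^+ c * p ^+ (N - c).

Lemma Erec_zeros {R : realType} (p : R) N y (G : bitseq -> R) :
  Erec p (nseq N false ++ y) G =
  \sum_(0 <= c < N.+1) wz p N c * Erec p y (fun s => G (nseq c false ++ s)).
Proof.
elim: N G => [|N IH] G.
  by rewrite big_nat1 /wz bin0 subnn !expr0 !mul1r.
rewrite /= !IH.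
rewrite big_nat_recl // [X in _ = _ + X](eq_bigr (fun c =>
   'C(N, c.+1)%:R * (1 - p) ^+ c.+1 * p ^+ (N - c) * Erec p y (fun s => G (nseq c.+1 false ++ s)) +
   (1 - p) * (wz p N c * Erec p y (fun s => G (nseq c.+1 false ++ s))))); last first.
  move=> c _; rewrite /wz binS natrD exprS subSS; ring.
rewrite big_split /= -big_distrr /= [RHS]addrA [RHS]addrC; congr (_ + _).
rewrite big_nat_recl // [X in _ = _ + X]big_nat_recr //= /wz (bin_small (ltnSn N)) !mul0r addr0.
rewrite mulrDr big_distrr /=; congr (_ + _).
  by rewrite !bin0 !subn0 !expr0 exprS; ring.
apply: eq_big_nat => c /andP [_ Hc].
have -> : (N - c = (N - c.+1).+1)%N by lia.
by rewrite (exprS p); ring.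
Qed.

Fixpoint Bsum {R : realType} (p : R) (Ns : seq nat) (G : seq nat -> R) : R :=
  match Ns with
  | [::] => G [::]
  | N :: Ns' => \sum_(0 <= c < N.+1) ((1 - p) * wz p N c) * Bsum p Ns' (fun cs => G (c :: cs))
  end.

Lemma count_blocks cs : count id (blocks cs) = size cs.
Proof.
elim: cs => [|c cs IH] //=.
by rewrite count_cat count_nseq /= mul0n IH.
Qed.

Lemma E2 {R : realType} (p : R) Ns (F : bitseq -> R) :
  (forall s, (count id s < size Ns)%N -> F s = 0) ->
  Erec p (blocks Ns) F = Bsum p Ns (fun cs => F (blocks cs)).
Proof.
elim: Ns F => [|N Ns IH] F H //=.
rewrite [X in _ + p * X]Erec_zero; last first.
  move=> s Hs; apply: H.
  have := leq_count_subseq id Hs.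
  by rewrite count_cat count_nseq mul0n count_blocks.
rewrite mulr0 addr0 Erec_zeros big_distrr /=.
apply: eq_bigr => c _; rewrite mulrA; congr (_ * _).
apply: IH => s Hs; apply: H => /=.
by rewrite count_cat count_nseq mul0n.
Qed.

Lemma Bsum_ext {R : realType} (p : R) Ns (F G : seq nat -> R) :
  (forall s, F s = G s) -> Bsum p Ns F = Bsum p Ns G.
Proof.
elim: Ns F G => [|N Ns IH] F G FG /=; first exact: FG.
by apply: eq_bigr => c _; rewrite (IH _ (fun s => G (c :: s))).
Qed.

Lemma Bsum_scale {R : realType} (p : R) Ns (a : R) (F : seq nat -> R) :
  Bsum p Ns (fun s => a * F s) = a * Bsum p Ns F.
Proof.
elim: Ns F => [|N Ns IH] F //=.
rewrite big_distrr /=; apply: eq_bigr => c _.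
by rewrite (IH (fun s => F (c :: s))); ring.
Qed.

Lemma Bsum_sum {R : realType} (p : R) Ns m n (G : nat -> seq nat -> R) :
  Bsum p Ns (fun s => \sum_(m <= i < n) G i s) = \sum_(m <= i < n) Bsum p Ns (G i).
Proof.
elim: Ns G => [|N Ns IH] G //=.
rewrite exchange_big /=; apply: eq_bigr => c _.
by rewrite (IH (fun i s => G i (c :: s))) big_distrr.
Qed.

Lemma sum_ind {R : realType} N t0 (a : nat -> R) : (t0 < N.+1)%N ->
  \sum_(0 <= c < N.+1) a c * (c == t0)%:R = a t0.
Proof.
move=> Ht.
rewrite (bigD1_seq t0) ?mem_index_iota ?iota_uniq //= eqxx mulr1 big1 ?addr0 //.
by move=> c /negbTE ->; rewrite mulr0.
Qed.

Lemma Bsum_eq {R : realType} (p : R) Ns t : size t = size Ns ->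
  Bsum p Ns (fun cs => (cs == t)%:R) =
  \prod_(j < size Ns) ((1 - p) * wz p (nth 0%N Ns j) (nth 0%N t j)).
Proof.
elim: Ns t => [|N Ns IH] [|t0 t] //=.
  by rewrite big_ord0.
move=> [Hs].
rewrite big_ord_recl /=.
rewrite (eq_bigr (fun c => ((1 - p) * wz p N c * Bsum p Ns (fun cs => (cs == t)%:R)) * (c == t0)%:R)); last first.
  move=> c _; rewrite -[RHS]mulrA; congr (_ * _).
  rewrite mulrC -Bsum_scale; apply: Bsum_ext => s /=.
  by rewrite eqseq_cons; case: (c == t0); rewrite ?mul1r ?mul0r.
rewrite IH //.
case: (ltnP t0 N.+1) => Ht.
  rewrite (@sum_ind _ N t0 (fun c => (1 - p) * wz p N c * \prod_(i < size Ns) ((1 - p) * wz p (nth 0%N Ns i) (nth 0%N t i)))) //.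
rewrite big1_seq /wz ?bin_small //; first by rewrite !(mul0r, mulr0).
move=> c /= ; rewrite mem_index_iota => Hc.
case: eqP => [Ec|]; last by rewrite mulr0.
by move: Hc; rewrite Ec /= ltnS leqNgt Ht.
Qed.

Lemma count_sumR {R : realType} (P : pred nat) n :
  (count P (iota 0 n))%:R = \sum_(0 <= i < n) (P i)%:R :> R.
Proof.
rewrite -sum1_count natr_sum big_mkcond /index_iota subn0 /=.
by apply: eq_bigr => i _; case: (P i).
Qed.

Lemma rot_mod_eq {T : Type} (s : seq T) e r : (e <= size s)%N -> (r < size s)%N ->
  rot e (rot r s) = rot ((e + r) %% size s) s.
Proof.
move=> He Hr; rewrite rot_add_mod ?(ltnW Hr) //.
case: ltngtP => H.
- by rewrite modn_small // ltnW.
- congr rot.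
  rewrite -{2}(subnK (ltnW H)) modnDr modn_small //; lia.
- by rewrite H modnn rot0 rot_size.
Qed.

Lemma R1 {R : realType} (s u : bitseq) c : size s = size u ->
  \sum_(0 <= r < size s) (rot r s == rot c u)%:R =
  \sum_(0 <= r < size s) (rot r s == u)%:R :> R.
Proof.
move=> Hsz.
case HL: (size s) => [|L]; first by rewrite !big_nil.
have Lpos : (0 < L.+1)%N by [].
set c0 := minn c L.+1.
set e := (L.+1 - c0)%N.
have Hc0 : (c0 <= L.+1)%N by rewrite geq_minr.
have He : (e <= L.+1)%N by rewrite leq_subr.
have Hu : rot c u = rot c0 u by rewrite (rot_minn c u) -Hsz HL.
have Heu : rot e (rot c0 u) = u.
  rewrite rot_add_mod -?Hsz ?HL // subnK // leqnn -HL Hsz rot_size //.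
rewrite Hu !big_mkord.
rewrite [RHS](reindex_inj (h := fun r : 'I_L.+1 => Ordinal (ltn_pmod (e + r) Lpos))) /=; last first.
  move=> r1 r2 /(congr1 val) /= /eqP; rewrite eqn_modDl !modn_small // => /eqP H.
  exact: val_inj.
apply: eq_bigr => r _.
rewrite -(inj_eq (@rot_inj e _)) Heu.
have := @rot_mod_eq _ s e r; rewrite HL => -> //.
Qed.
Import Order.TTheory GRing.Theory Num.Theory.
Local Open Scope ring_scope.

Lemma blocks_cat s1 s2 : blocks (s1 ++ s2) = blocks s1 ++ blocks s2.
Proof. by rewrite /blocks map_cat flatten_cat. Qed.

Lemma blocks_cons c s : blocks (c :: s) = true :: nseq c false ++ blocks s.
Proof. by []. Qed.

Lemma K1 cs i : rot (size (blocks (take i cs))) (blocks cs) = blocks (rot i cs).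
Proof.
by rewrite -{2}(cat_take_drop i cs) blocks_cat rot_size_cat /rot blocks_cat.
Qed.

Lemma size_blocks_take_S cs i : (i < size cs)%N ->
  size (blocks (take i.+1 cs)) = (size (blocks (take i cs)) + (nth 0%N cs i).+1)%N.
Proof.
move=> Hi; rewrite (take_nth 0%N Hi) -cats1 blocks_cat size_cat /= cats0 size_nseq //.
Qed.

Lemma size_blocks_take_le cs i : (size (blocks (take i cs)) <= size (blocks cs))%N.
Proof. by rewrite -{2}(cat_take_drop i cs) blocks_cat size_cat leq_addr. Qed.

Lemma nth_rot0 {T : Type} (x0 : T) (X : seq T) o : (o < size X)%N ->
  nth x0 (rot o X) 0 = nth x0 X o.
Proof.
move=> Ho; rewrite /rot nth_cat size_drop subn_gt0 Ho nth_drop addn0 //.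
Qed.

Lemma K2 cs i o : (i < size cs)%N -> (0 < o <= nth 0%N cs i)%N ->
  nth false (rot o (blocks (rot i cs))) 0 = false.
Proof.
move=> Hi /andP [Ho1 Ho2].
have Hr : rot i cs = nth 0%N cs i :: (drop i.+1 cs ++ take i cs).
  by rewrite /rot (drop_nth 0%N Hi).
rewrite Hr blocks_cons nth_rot0; last first.
  by rewrite /= size_cat size_nseq ltnS (leq_trans Ho2) ?leq_addr.
case: o Ho1 Ho2 => [|o] // _ Ho2 /=.
by rewrite nth_cat size_nseq Ho2 nth_nseq Ho2.
Qed.

Lemma R2 {R : realType} (g : bitseq -> R) cs :
  (forall t, nth false t 0 = false -> g t = 0) ->
  \sum_(0 <= r < size (blocks cs)) g (rot r (blocks cs)) =
  \sum_(0 <= i < size cs) g (blocks (rot i cs)).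
Proof.
move=> Hg.
suff H : forall i, (i <= size cs)%N ->
  \sum_(0 <= r < size (blocks (take i cs))) g (rot r (blocks cs)) =
  \sum_(0 <= j < i) g (blocks (rot j cs)).
  by have := H _ (leqnn _); rewrite take_size.
elim=> [|i IH] Hi; first by rewrite take0 !big_nil.
rewrite size_blocks_take_S // big_nat_recr // -IH; last exact: ltnW.
rewrite (big_cat_nat _ (n := size (blocks (take i cs)))); last exact: leq_addr.
  2: exact: leq0n.
congr (_ + _).
rewrite big_ltn; last by rewrite -[X in (X < _)%N]addn0 ltn_add2l.
rewrite K1 big1_seq; first exact: addr0.
move=> r /andP [_].
rewrite mem_index_iota => /andP [H1 H2].
have -> : r = ((r - size (blocks (take i cs))) + size (blocks (take i cs)))%N.
  by rewrite subnK // ltnW.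
rewrite rotD; last first.
  rewrite subnK; last exact: ltnW.
  apply: leq_trans (ltnW H2) _.
  by rewrite -size_blocks_take_S // size_blocks_take_le.
rewrite K1.
apply: Hg; apply: K2 => //.
rewrite subn_gt0 H1 /=.
lia.
Qed.

Lemma nseq_head_inj c d (u v : bitseq) : nseq c false ++ u = nseq d false ++ v ->
  head true u -> head true v -> c = d /\ u = v.
Proof.
elim: c d => [|c IH] [|d] //=; first by move=> ->.
- by move=> <- /=.
- by move=> [] /IH H /H {}H /H [-> ->].
Qed.

Lemma head_blocks x : head true (blocks x).
Proof. by case: x. Qed.

Lemma blocks_inj : injective blocks.
Proof.
elim=> [|c x IH] [|d y] //.
rewrite !blocks_cons => -[] /nseq_head_inj H.
by case: (H (head_blocks x) (head_blocks y)) => -> /IH ->.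
Qed.

Lemma R3 {R : realType} (cs aseq : seq nat) : size cs = size aseq ->
  \sum_(0 <= i < size aseq) (rot i cs == aseq)%:R =
  \sum_(1 <= i < (size aseq).+1) (cs == rot i aseq)%:R :> R.
Proof.
move=> Hs.
rewrite big_add1 /= big_nat_rev /= add0n.
apply: eq_big_nat => i /andP [_ Hi].
rewrite -(inj_eq (can_inj (rotrK (size aseq - i.+1)))) rotK.
by rewrite /rotr subKn.
Qed.

Lemma size_blocks s : size (blocks s) = (size s + sumn s)%N.
Proof.
elim: s => [|c s IH] //=.
rewrite size_cat size_nseq IH /=; lia.
Qed.

Lemma E3 {R : realType} (cs aseq : seq nat) r0 : size cs = size aseq -> (0 < size aseq)%N ->
  circ_shift_prob (blocks cs) (rot r0 (blocks aseq)) =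
  (size (blocks aseq))%:R^-1 * \sum_(1 <= i < (size aseq).+1) (cs == rot i aseq)%:R :> R.
Proof.
move=> Hs Hk.
have Hpos : size (blocks cs) != 0%N.
  by case: cs Hs => [|c cs] //= Hs; move: Hk; rewrite -Hs.
rewrite /circ_shift_prob (negbTE Hpos) count_sumR.
case: (eqVneq (size (blocks cs)) (size (blocks aseq))) => HL.
  rewrite R1 // (@R2 _ (fun t => (t == blocks aseq)%:R)); last first.
    move=> t Ht; case: eqP => // Et; move: Ht; rewrite Et.
    by case: (aseq) Hk.
  rewrite (eq_big_nat _ _ (F2 := fun i => (rot i cs == aseq)%:R)); last first.
    by move=> i _; rewrite (inj_eq blocks_inj).
  by rewrite Hs R3 // HL mulrC.
rewrite big1_seq; last first.
  move=> r _; case: eqP => // E; move: HL; rewrite -(size_rot r) E size_rot eqxx //.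
rewrite big1_seq ?mul0r ?mulr0 //.
move=> i _; case: eqP => // E; move: HL; rewrite E !size_blocks size_rot sumn_rot eqxx //.
Qed.

Lemma binkey {R : realType} N c :
  'C(N, c)%:R * (N.+1)%:R = 'C(N.+1, c)%:R * ((N.+1)%:R - c%:R) :> R.
Proof.
have := mul_bin_down N.+1 c; rewrite /= => H.
case: (leqP c N.+1) => Hc.
  by rewrite mulrC -natrM H natrM natrB // mulrC.
by rewrite !bin_small ?mul0r // ltnW.
Qed.

Lemma BI {R : realType} n x X c : (x <= X)%N ->
  'C(n + x, c)%:R * \prod_(x.+1 <= h < X.+1) ((n + h)%:R : R) =
  'C(n + X, c)%:R * \prod_(x.+1 <= h < X.+1) ((n + h)%:R - c%:R).
Proof.
elim: X => [|X IH] H.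
  by move: H; rewrite leqn0 => /eqP ->; rewrite !big_geq.
case: (ltnP X x) => Hx.
  have -> : x = X.+1 by apply/eqP; rewrite eqn_leq H Hx.
  by rewrite !big_geq.
rewrite [in LHS]big_nat_recr // [in RHS]big_nat_recr //= mulrA IH //.
set Q := \prod_(x.+1 <= h < X.+1) _.
have := @binkey R (n + X) c; rewrite -addnS => K.
transitivity ('C(n + X, c)%:R * (n + X.+1)%:R * Q); first ring.
by rewrite K; ring.
Qed.

Lemma perj {R : realType} (p : R) n x X c : (x <= X)%N ->
  (1 - p) * wz p (n + x) c * (p ^+ (X - x) * \prod_(x.+1 <= h < X.+1) ((n + h)%:R : R)) =
  (1 - p) * wz p (n + X) c * \prod_(x.+1 <= h < X.+1) ((n + h)%:R - c%:R).
Proof.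
move=> H; rewrite /wz.
have B := @BI R n x X c H.
case: (leqP c (n + x)) => Hc.
  have -> : (n + X - c = (n + x - c) + (X - x))%N by lia.
  rewrite exprD.
  transitivity ((1 - p) * (1 - p) ^+ c * p ^+ (n + x - c) * p ^+ (X - x) *
     ('C(n + x, c)%:R * \prod_(x.+1 <= h < X.+1) ((n + h)%:R : R))); first ring.
  rewrite B; ring.
have Z : 'C(n + x, c) = 0%N by rewrite bin_small.
move: B; rewrite Z mul0r => B.
transitivity (0 : R); first by rewrite !mul0r mulr0 mul0r.
transitivity ((1 - p) * (1 - p) ^+ c * p ^+ (n + X - c) *
   ('C(n + X, c)%:R * \prod_(x.+1 <= h < X.+1) ((n + h)%:R - c%:R))); last by ring.
by rewrite -B mulr0.
Qed.

Lemma nth_rot {T : Type} (x0 : T) (s : seq T) i j : (i <= size s)%N -> (j < size s)%N ->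
  nth x0 (rot i s) j = nth x0 s ((j + i) %% size s).
Proof.
move=> Hi Hj; rewrite /rot nth_cat size_drop.
case: ltnP => H.
  rewrite nth_drop modn_small; first by rewrite addnC.
  lia.
rewrite nth_take; last by lia.
congr nth.
have E : (j + i = (j - (size s - i)) + size s)%N.
  lia.
rewrite E modnDr modn_small //.
lia.
Qed.

Lemma Bsum_ext_size {R : realType} (p : R) Ns (F G : seq nat -> R) :
  (forall s, size s = size Ns -> F s = G s) -> Bsum p Ns F = Bsum p Ns G.
Proof.
elim: Ns F G => [|N Ns IH] F G FG /=; first exact: FG.
apply: eq_bigr => c _; rewrite (IH _ (fun s => G (c :: s))) // => s Hs.
by apply: FG; rewrite /= Hs.
Qed.

Lemma count_rot_id (t : bitseq) m : count id (rot m t) = count id t.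
Proof. have H : perm_eq (rot m t) t by rewrite perm_rot. exact: (elimT permP H id). Qed.

Theorem lemma5p1 (R : realType) (k n xstar : nat) (p : R) (aseq : seq nat) :
  (0 < k)%N -> (0 < n)%N -> (0 < xstar)%N -> 0 < p < 1 -> size aseq = k ->
  exists Sym : seq nat -> R,
    (forall s t : seq nat, size s = k -> all (fun v => v <= xstar)%N s ->
        perm_eq s t -> Sym s = Sym t) /\
    (forall (r : nat) (xs : seq nat), size xs = k -> all (fun v => v <= xstar)%N xs ->
       del_prob p (xstring n xs) (rot r (blocks aseq)) =
       Sym xs *
       \sum_(1 <= i < k.+1) \prod_(1 <= j < k.+1)
          \prod_((nth 0%N xs j.-1).+1 <= h < xstar.+1)
             (p * n%:R - bcoef n p aseq ((j + i).-1 %% k) + h%:R)).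
Proof.
move=> Hk Hn HX /andP [Hp0 Hp1] Hsz.
subst k.
set A0 := blocks aseq.
pose f v := (1 - p) * wz p (n + xstar) v.
pose P x := \prod_(x.+1 <= h < xstar.+1) ((n + h)%:R : R).
pose D x := p ^+ (xstar - x) * P x.
exists (fun s => (size A0)%:R^-1 * \prod_(v <- aseq) f v * \prod_(v <- s) (D v)^-1).
split.
  by move=> s t _ _ Hst; rewrite (perm_big _ Hst).
move=> r xs Hxs Hall.
rewrite /del_prob (E1 p _ (fun s => circ_shift_prob s (rot r A0))) /xstring E2; last first.
  move=> s; rewrite size_map Hxs => Hs.
  have Hne : forall m, rot m s != rot r A0.
    move=> m; apply/eqP => E.
    have := congr1 (count id) E; rewrite !count_rot_id count_blocks => E'.
    by move: Hs; rewrite E' ltnn.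
  rewrite /circ_shift_prob; case: ifP => _.
    by have := Hne 0%N; rewrite !rot0 => /negbTE ->.
  have -> : count (fun r0 => rot r0 s == rot r A0) (iota 0 (size s)) = 0%N.
    apply/eqP; rewrite -leqn0 leqNgt -has_count; apply/hasPn => m _.
    exact: Hne.
  by rewrite mul0r.
have Hk' := Hk.
rewrite (@Bsum_ext_size _ p _ _ (fun cs => (size A0)%:R^-1 *
   \sum_(1 <= i < (size aseq).+1) (cs == rot i aseq)%:R)); last first.
  by move=> s Hs; rewrite E3 // Hs size_map Hxs.
rewrite Bsum_scale Bsum_sum big_distrr /= big_distrr /=.
apply: eq_big_nat => i /andP [Hi1 Hi2].
rewrite Bsum_eq; last by rewrite size_rot size_map Hxs.
have Dnz : forall x, D x != 0.
  move=> x; rewrite /D mulf_neq0 ?expf_neq0 ?gt_eqF //.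
  rewrite /P; apply: prodr_gt0 => h _.
  by rewrite ltr0n addn_gt0 Hn.
rewrite (eq_bigr (fun j : 'I_(size [seq (n + v)%N | v <- xs]) =>
   f (nth 0%N (rot i aseq) j) *
   \prod_((nth 0%N xs j).+1 <= h < xstar.+1) ((n + h)%:R - (nth 0%N (rot i aseq) j)%:R) *
   (D (nth 0%N xs j))^-1)); last first.
  move=> j _.
  have Hj : (j < size xs)%N := leq_trans (ltn_ord j) (eq_leq (size_map _ xs)).
  have Hx : (nth 0%N xs j <= xstar)%N by apply: (allP Hall); rewrite mem_nth.
  rewrite (nth_map 0%N) //.
  apply: (mulIf (Dnz (nth 0%N xs j))); rewrite divfK // /f /D /P.
  exact: perj.
rewrite big_split big_split /=.
have Hp : perm_eq (rot i aseq) aseq by rewrite perm_rot.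
have HF : \prod_(j < size [seq (n + v)%N | v <- xs]) f (nth 0%N (rot i aseq) j) = \prod_(v <- aseq) f v.
  by rewrite -(perm_big _ Hp) (big_nth 0%N) big_mkord size_rot size_map Hxs.
have HD : \prod_(j < size [seq (n + v)%N | v <- xs]) (D (nth 0%N xs j))^-1 = \prod_(v <- xs) (D v)^-1.
  by rewrite (big_nth 0%N) big_mkord size_map.
have HQ : \prod_(j < size [seq (n + v)%N | v <- xs])
   \prod_((nth 0%N xs j).+1 <= h < xstar.+1) ((n + h)%:R - (nth 0%N (rot i aseq) j)%:R) =
  \prod_(1 <= j < (size aseq).+1)
     \prod_((nth 0%N xs j.-1).+1 <= h < xstar.+1)
        (p * n%:R - bcoef n p aseq ((j + i).-1 %% size aseq) + h%:R).
  rewrite big_add1 /= big_mkord size_map Hxs.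
  apply: eq_bigr => j _; apply: eq_bigr => h _.
  rewrite /bcoef nth_rot; [ | by rewrite -ltnS | exact: ltn_ord].
  rewrite natrD; ring.
rewrite HF HD HQ; ring.
Qed.
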